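(* Let $h(x,t)=\phi(x,x_{cl}(t))\chi_{(-x_{cl}(t),x_{cl}(t))}(x)$ be a moving-contact-line solution with $\dot x_{cl}(t)\neq0$, such that $\int_{\mathbb{R}}h(x,t)\,\mathrm{d}x$ is constant in time and, on the interval $(-x_{cl}(t),x_{cl}(t))$, the equation $$\dot x_{cl}\,\frac{\partial\phi}{\partial s}(x,x_{cl})+\frac{\partial}{\partial x}\Big(\phi(x,x_{cl})\,m(\bar h)\,\partial_{xxx}\bar h\Big)=0$$ holds classically, with $\phi(\cdot,x_{cl})\,m(\bar h)\partial_{xxx}\bar h$ extending continuously to $[-x_{cl},x_{cl}]$. If $\phi(x_{cl}(t),x_{cl}(t))\neq0$, then $$\dot x_{cl}(t)=\Big[m(\bar h)\,\partial_{xxx}\bar h\Big]_{x=x_{cl}(t)} .$$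
   Context: Fix $\alpha,\gamma,\mu>0$. $K_2(x)=\frac{1}{4\alpha^2}(\alpha+|x|)e^{-|x|/\alpha}$ is the bi-Helmholtz kernel, $\bar h=K_2*h$, and $m(s)=\frac{\gamma}{3\mu}s^2$. A moving-contact-line solution has the form $h(x,t)=\phi(x,x_{cl}(t))\chi_{(-x_{cl},x_{cl})}(x)$ with $x_{cl}(t)>0$ differentiable, $\phi(x,s)$ continuously differentiable in $(x,s)$ for $|x|\le s$, smooth in $x$, and even in $x$; $\partial\phi/\partial s$ is the derivative in the second argument; $\chi_A$ is the indicator function of $A$. *)

(* Defs.v *)
From Stdlib Require Import Reals.
From Coquelicot Require Import Coquelicot.
Open Scope R_scope.

Definition K2 (alpha x : R) : R :=
  / (4 * alpha ^ 2) * (alpha + Rabs x) * exp (- Rabs x / alpha).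

Definition mob (gamma mu s : R) : R := gamma / (3 * mu) * s ^ 2.

Definition hsol (xcl : R -> R) (phi : R -> R -> R) (x t : R) : R :=
  if Rlt_dec (Rabs x) (xcl t) then phi x (xcl t) else 0.

Definition hbar (alpha : R) (xcl : R -> R) (phi : R -> R -> R) (x t : R) : R :=
  RInt_gen (fun y => K2 alpha (x - y) * hsol xcl phi y t)
    (Rbar_locally m_infty) (Rbar_locally p_infty).

Definition hbar_xxx (alpha : R) (xcl : R -> R) (phi : R -> R -> R) (x t : R) : R :=
  Derive_n (fun y => hbar alpha xcl phi y t) 3 x.

Definition mass (xcl : R -> R) (phi : R -> R -> R) (t : R) : R :=
  RInt_gen (fun x => hsol xcl phi x t) (Rbar_locally m_infty) (Rbar_locally p_infty).

Definition flux (alpha gamma mu : R) (xcl : R -> R) (phi : R -> R -> R) (x t : R) : R :=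
  phi x (xcl t) * mob gamma mu (hbar alpha xcl phi x t) * hbar_xxx alpha xcl phi x t.

Definition domD (p : R * R) : Prop := 0 < snd p /\ Rabs (fst p) <= snd p.

Definition cont_on_D (f : R -> R -> R) : Prop :=
  forall x s, domD (x, s) ->
    filterlim (fun p : R * R => f (fst p) (snd p))
      (within domD (locally (x, s))) (locally (f x s)).

Definition C1_on_D (phi : R -> R -> R) : Prop :=
  cont_on_D phi /\
  exists phix phis : R -> R -> R,
    cont_on_D phix /\ cont_on_D phis /\
    forall x s, 0 < s -> Rabs x < s ->
      is_derive (fun y => phi y s) x (phix x s) /\
      is_derive (fun r => phi x r) s (phis x s).

Definition smooth_in_x (phi : R -> R -> R) : Prop :=
  forall s x n, 0 < s -> Rabs x < s -> ex_derive_n (fun y => phi y s) n x.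

Definition even_in_x (phi : R -> R -> R) : Prop :=
  forall s x, 0 < s -> Rabs x <= s -> phi (- x) s = phi x s.

Definition in_I (a b : Rbar) (t : R) : Prop := Rbar_lt a t /\ Rbar_lt t b.

(* Main.v *)
Require Import Defs.
From Stdlib Require Import Reals Lra Lia Psatz ClassicalEpsilon.
From Coquelicot Require Import Coquelicot.
Open Scope R_scope.

Lemma ed_continuous (f : R -> R) x :
  (forall eps, 0 < eps -> exists d, 0 < d /\ forall y, Rabs (y - x) < d -> Rabs (f y - f x) < eps) ->
  continuous f x.
Proof.
  intros H. apply filterlim_locally. intros eps.
  destruct (H eps (cond_pos eps)) as [d [Hd Hy]].
  exists (mkposreal d Hd). intros y Hy'. apply Hy. exact Hy'.
Qed.

Lemma continuous_ed (f : R -> R) x : continuous f x ->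
  forall eps, 0 < eps -> exists d, 0 < d /\ forall y, Rabs (y - x) < d -> Rabs (f y - f x) < eps.
Proof.
  intros H eps He. apply filterlim_locally with (eps := mkposreal eps He) in H.
  destruct H as [d Hd]. exists d. split. apply cond_pos. intros y Hy. apply (Hd y Hy).
Qed.

Lemma cD_ed f x s : cont_on_D f -> domD (x,s) -> forall eps, 0<eps -> exists d, 0<d /\
  forall y r, Rabs (y-x) < d -> Rabs (r-s) < d -> domD (y,r) -> Rabs (f y r - f x s) < eps.
Proof.
  intros Hf HD eps He. specialize (Hf x s HD).
  apply filterlim_locally with (eps := mkposreal eps He) in Hf.
  destruct Hf as [d Hd]. exists d. split. apply cond_pos.
  intros y r H1 H2 H3. apply (Hd (y,r)). split; assumption. exact H3.
Qed.

Lemma within_ed (f : R -> R) (D : R -> Prop) x :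
  filterlim f (within D (locally x)) (locally (f x)) ->
  forall eps, 0<eps -> exists d, 0<d /\ forall y, Rabs (y-x) < d -> D y -> Rabs (f y - f x) < eps.
Proof.
  intros Hf eps He.
  apply filterlim_locally with (eps := mkposreal eps He) in Hf.
  destruct Hf as [d Hd]. exists d. split. apply cond_pos.
  intros y H1 H2. apply (Hd y H1 H2).
Qed.

Definition clamp (a b y : R) := Rmax a (Rmin b y).

Lemma clamp_lip a b y z : Rabs (clamp a b y - clamp a b z) <= Rabs (y - z).
Proof. unfold clamp, Rmax, Rmin.
  repeat (destruct Rle_dec); split_Rabs; lra. Qed.

Lemma clamp_in a b y : a <= b -> a <= clamp a b y <= b.
Proof. intros. unfold clamp, Rmax, Rmin. repeat (destruct Rle_dec); lra. Qed.

Lemma clamp_id a b y : a <= y <= b -> clamp a b y = y.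
Proof. intros. unfold clamp, Rmax, Rmin. repeat (destruct Rle_dec); lra. Qed.

Definition wcont (f : R -> R) a b := forall y, a <= y <= b -> forall eps, 0 < eps ->
  exists d, 0 < d /\ forall z, a <= z <= b -> Rabs (z - y) < d -> Rabs (f z - f y) < eps.

Lemma wcont_clamp f a b : a <= b -> wcont f a b -> forall y, continuous (fun z => f (clamp a b z)) y.
Proof.
  intros Hab Hw y. apply ed_continuous. intros eps He.
  destruct (Hw (clamp a b y) (clamp_in a b y Hab) eps He) as [d [Hd H]].
  exists d. split; auto. intros z Hz. apply H. apply clamp_in; auto.
  eapply Rle_lt_trans. apply clamp_lip. auto.
Qed.

Lemma bnd_cont (g : R -> R) a b : a <= b -> (forall y, continuous g y) ->
  exists M, forall y, a <= y <= b -> Rabs (g y) <= M.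
Proof.
  intros Hab Hg.
  destruct (continuity_ab_maj (fun y => Rabs (g y)) a b Hab) as [Mx [HM _]].
  - intros c _. apply continuity_pt_filterlim. apply (ed_continuous (fun y => Rabs (g y))). intros eps He.
    destruct (continuous_ed g c (Hg c) eps He) as [d [Hd H]]. exists d. split; auto.
    intros y Hy. eapply Rle_lt_trans. apply Rabs_triang_inv2. auto.
  - exists (Rabs (g Mx)). auto.
Qed.

Lemma wcont_ex_RInt f a b : a <= b -> wcont f a b -> ex_RInt f a b.
Proof.
  intros Hab Hw. apply ex_RInt_ext with (fun z => f (clamp a b z)).
  - intros x Hx. rewrite Rmin_left in Hx by lra. rewrite Rmax_right in Hx by lra.
    rewrite clamp_id; lra.
  - apply (@ex_RInt_continuous R_CompleteNormedModule). intros. apply wcont_clamp; auto.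
Qed.

Lemma wcont_bnd f a b : a <= b -> wcont f a b -> exists M, forall y, a <= y <= b -> Rabs (f y) <= M.
Proof.
  intros Hab Hw. destruct (bnd_cont _ a b Hab (wcont_clamp f a b Hab Hw)) as [M HM].
  exists M. intros y Hy. specialize (HM y Hy). rewrite clamp_id in HM; auto.
Qed.

Lemma RInt_bound_open f a b M : a <= b -> ex_RInt f a b ->
  (forall t, a < t < b -> Rabs (f t) <= M) -> Rabs (RInt f a b) <= (b - a) * M.
Proof.
  intros Hab Hex HM. destruct (Req_dec a b) as [->|Hne].
  { rewrite RInt_point. unfold zero; simpl. rewrite Rabs_R0. lra. }
  assert (HM0 : 0 <= M). { specialize (HM ((a+b)/2)). assert (H := Rabs_pos (f ((a+b)/2))). 
    assert (Rabs (f ((a + b) / 2)) <= M) by (apply HM; lra). lra. }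
  set (f' := fun t => if Rlt_dec a t then if Rlt_dec t b then f t else 0 else 0).
  assert (Hext : forall x, Rmin a b < x < Rmax a b -> f x = f' x).
  { intros x Hx. rewrite Rmin_left in Hx by lra. rewrite Rmax_right in Hx by lra.
    unfold f'. destruct Rlt_dec; [destruct Rlt_dec|]; lra. }
  rewrite (RInt_ext f f' a b Hext).
  apply abs_RInt_le_const; auto.
  - apply ex_RInt_ext with f; auto.
  - intros t Ht. unfold f'. destruct Rlt_dec; [destruct Rlt_dec|].
    + apply HM; lra.
    + rewrite Rabs_R0; lra.
    + rewrite Rabs_R0; lra.
Qed.

Lemma RInt_bound_gen f a b M : ex_RInt f a b ->
  (forall t, Rmin a b < t < Rmax a b -> Rabs (f t) <= M) -> Rabs (RInt f a b) <= Rabs (b - a) * M.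
Proof.
  intros Hex HM. destruct (Rle_dec a b).
  - rewrite (Rabs_right (b - a)) by lra. apply RInt_bound_open; auto.
    intros t Ht. apply HM. rewrite Rmin_left, Rmax_right; lra.
  - rewrite <- (opp_RInt_swap f b a) by (apply ex_RInt_swap; auto). unfold opp; simpl. rewrite Rabs_Ropp.
    rewrite (Rabs_left (b - a)) by lra. replace (- (b - a)) with (a - b) by ring.
    apply RInt_bound_open; auto. lra. apply ex_RInt_swap; auto.
    intros t Ht. apply HM. rewrite Rmin_right, Rmax_left; lra.
Qed.

Lemma zero_piece (f : R -> R) u v : (forall y, Rmin u v < y < Rmax u v -> f y = 0) -> is_RInt f u v 0.
Proof.
  intros H. apply is_RInt_ext with (fun _ => 0).
  intros; symmetry; auto.
  pose proof (@is_RInt_const R_NormedModule u v 0) as H0.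
  unfold scal in H0; simpl in H0; unfold mult in H0; simpl in H0. rewrite Rmult_0_r in H0. exact H0.
Qed.

Lemma supp_is_RInt f c a b : 0 < c -> (forall y, c <= Rabs y -> f y = 0) -> ex_RInt f (-c) c ->
  a <= -c -> c <= b -> is_RInt f a b (RInt f (-c) c).
Proof.
  intros Hc Hz Hex Ha Hb.
  replace (RInt f (-c) c) with (plus (plus 0 (RInt f (-c) c)) 0).
  2:{ unfold plus; simpl. ring. }
  apply (@is_RInt_Chasles R_NormedModule) with c.
  apply (@is_RInt_Chasles R_NormedModule) with (-c).
  - apply zero_piece. intros y Hy. rewrite Rmin_left in Hy by lra. rewrite Rmax_right in Hy by lra.
    apply Hz. rewrite Rabs_left by lra. lra.
  - apply (@RInt_correct R_CompleteNormedModule); auto.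
  - apply zero_piece. intros y Hy. rewrite Rmin_left in Hy by lra. rewrite Rmax_right in Hy by lra.
    apply Hz. rewrite Rabs_right by lra. lra.
Qed.

Lemma supp_RInt_gen f c : 0 < c -> (forall y, c <= Rabs y -> f y = 0) -> ex_RInt f (-c) c ->
  RInt_gen f (Rbar_locally m_infty) (Rbar_locally p_infty) = RInt f (-c) c.
Proof.
  intros Hc Hz Hex. apply is_RInt_gen_unique.
  intros P HP. simpl.
  apply Filter_prod with (fun a => a < -c) (fun b => c < b).
  - exists (-c). auto.
  - exists c. auto.
  - intros a b Ha Hb. exists (RInt f (-c) c). split.
    + apply supp_is_RInt; simpl; auto; lra.
    + apply locally_singleton. auto.
Qed.
Definition kf (p q sg z : R) := (p + q * z) * exp (sg * z).
Record KP := mkKP { p1 : R; q1 : R; s1 : R; p2 : R; q2 : R; s2 : R }.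
Definition kv (P : KP) z := kf (p1 P) (q1 P) (s1 P) z + kf (p2 P) (q2 P) (s2 P) z.
Definition Dk (P : KP) := mkKP (p1 P * s1 P + q1 P) (q1 P * s1 P) (s1 P)
  (p2 P * s2 P + q2 P) (q2 P * s2 P) (s2 P).

Lemma kv_deriv P z : is_derive (kv P) z (kv (Dk P) z).
Proof. unfold kv, kf, Dk; simpl. auto_derive; auto. ring. Qed.

Lemma kv_cont P z : continuous (kv P) z.
Proof. apply (ex_derive_continuous (kv P)). eexists. apply kv_deriv. Qed.

Lemma kv_shift_cont P x y : continuous (fun y => kv P (x - y)) y.
Proof. apply (ex_derive_continuous (fun y => kv P (x - y))). unfold kv, kf. auto_derive. auto. Qed.

Lemma kv_bnd P R0 : exists M, forall z, Rabs z <= R0 -> Rabs (kv P z) <= M.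
Proof.
  destruct (Rle_dec 0 R0).
  - destruct (bnd_cont (kv P) (-R0) R0) as [M HM]; try lra. apply kv_cont.
    exists M. intros z Hz. apply HM. split_Rabs; lra.
  - exists 0. intros z Hz. pose proof (Rabs_pos z). lra.
Qed.

Lemma mvt_glob f df a b : (forall x, is_derive f x (df x)) ->
  exists c, Rmin a b <= c <= Rmax a b /\ f b - f a = df c * (b - a).
Proof.
  intros H. destruct (MVT_gen f a b df) as [c [Hc E]].
  - intros; auto.
  - intros x _. apply continuity_pt_filterlim. apply (ex_derive_continuous f). eexists; apply H.
  - exists c; split; auto.
Qed.

Lemma Rmin_Rmax_abs a b c R0 : Rmin a b <= c <= Rmax a b -> Rabs a <= R0 -> Rabs b <= R0 -> Rabs c <= R0.
Proof. unfold Rmin, Rmax. intros. destruct Rle_dec; split_Rabs; lra. Qed.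

Lemma kv_lip P R0 M z w : (forall u, Rabs u <= R0 -> Rabs (kv (Dk P) u) <= M) ->
  Rabs z <= R0 -> Rabs w <= R0 -> Rabs (kv P w - kv P z) <= M * Rabs (w - z).
Proof.
  intros HM Hz Hw. destruct (mvt_glob (kv P) (kv (Dk P)) z w (kv_deriv P)) as [c [Hc E]].
  rewrite E, Rabs_mult. apply Rmult_le_compat_r. apply Rabs_pos.
  apply HM. eapply Rmin_Rmax_abs; eauto.
Qed.

Lemma kv_taylor P R0 M z e : (forall w, Rabs w <= R0 -> Rabs (kv (Dk (Dk P)) w) <= M) ->
  Rabs z <= R0 -> Rabs (z + e) <= R0 ->
  Rabs (kv P (z + e) - kv P z - e * kv (Dk P) z) <= M * e ^ 2.
Proof.
  intros HM Hz Hze.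
  set (g := fun u => kv P (z + u) - kv P z - u * kv (Dk P) z).
  set (dg := fun u => kv (Dk P) (z + u) - kv (Dk P) z).
  assert (Hg : forall u, is_derive g u (dg u)).
  { intros u. unfold g, dg, kv, kf, Dk; simpl. auto_derive; auto. ring. }
  destruct (mvt_glob g dg 0 e Hg) as [c [Hc E]].
  assert (Ezz : g 0 = 0) by (unfold g; rewrite Rplus_0_r; ring).
  replace (kv P (z + e) - kv P z - e * kv (Dk P) z) with (g e) by reflexivity.
  replace (g e) with (dg c * e) by (replace (g e) with (g e - g 0) by (rewrite Ezz; ring); rewrite E; ring).
  assert (Hc' : Rabs c <= Rabs e).
  { unfold Rmin, Rmax in Hc. destruct Rle_dec; split_Rabs; lra. }
  assert (Hzc : Rabs (z + c) <= R0).
  { apply (Rmin_Rmax_abs z (z + e)); auto. unfold Rmin, Rmax in *. repeat destruct Rle_dec; lra. }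
  assert (Hd : Rabs (dg c) <= M * Rabs c).
  { unfold dg. replace c with ((z + c) - z) at 2 by ring. apply kv_lip with R0; auto. }
  rewrite Rabs_mult.
  assert (0 <= M). { specialize (HM z Hz). pose proof (Rabs_pos (kv (Dk (Dk P)) z)). lra. }
  apply Rle_trans with (M * Rabs c * Rabs e). apply Rmult_le_compat_r; auto. apply Rabs_pos.
  replace (e ^ 2) with (Rabs e * Rabs e) by (rewrite <- Rabs_mult; rewrite Rabs_right; [ring| nra]).
  rewrite Rmult_assoc. apply Rmult_le_compat_l; auto. apply Rmult_le_compat_r; auto. apply Rabs_pos.
Qed.
Ltac rring := match goal with |- @eq _ ?a ?b => change (@eq R a b); ring end.

Lemma deriv_from_bound f x l C d : 0 < d ->
  (forall e, Rabs e < d -> Rabs (f (x + e) - f x - e * l) <= C * e ^ 2) -> is_derive f x l.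
Proof.
  intros Hd H. apply is_derive_Reals. intros eps He.
  assert (HC : 0 < Rabs C + 1) by (pose proof (Rabs_pos C); lra).
  assert (Hd2 : 0 < Rmin d (eps / (Rabs C + 1))).
  { apply Rmin_pos; auto. apply Rdiv_lt_0_compat; lra. }
  exists (mkposreal _ Hd2). intros e He0 Hel. simpl in Hel.
  assert (Hel1 : Rabs e < d) by (eapply Rlt_le_trans; [exact Hel| apply Rmin_l]).
  assert (Hel2 : Rabs e < eps / (Rabs C + 1)) by (eapply Rlt_le_trans; [exact Hel| apply Rmin_r]).
  specialize (H e Hel1).
  replace ((f (x + e) - f x) / e - l) with ((f (x + e) - f x - e * l) / e) by (field; auto).
  unfold Rdiv. rewrite Rabs_mult, Rabs_inv.
  assert (Hae : 0 < Rabs e) by (apply Rabs_pos_lt; auto).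
  apply Rle_lt_trans with (C * e ^ 2 * / Rabs e).
  apply Rmult_le_compat_r; auto. left; apply Rinv_0_lt_compat; auto.
  replace (C * e ^ 2 * / Rabs e) with (C * Rabs e).
  2:{ replace (e ^ 2) with (Rabs e * Rabs e) by (rewrite <- Rabs_mult; rewrite Rabs_right; [ring| nra]). field. lra. }
  apply Rle_lt_trans with (Rabs C * Rabs e). apply Rmult_le_compat_r; [lra| apply Rle_abs].
  apply Rle_lt_trans with ((Rabs C + 1) * Rabs e). apply Rmult_le_compat_r; lra.
  replace eps with ((Rabs C + 1) * (eps / (Rabs C + 1))) by (field; lra).
  apply Rmult_lt_compat_l; auto.
Qed.

Lemma RInt_lin3 f1 f2 f3 a b e : ex_RInt f1 a b -> ex_RInt f2 a b -> ex_RInt f3 a b ->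
  RInt (fun y => f1 y - f2 y - e * f3 y) a b = RInt f1 a b - RInt f2 a b - e * RInt f3 a b.
Proof.
  intros H1 H2 H3. apply (@is_RInt_unique R_CompleteNormedModule).
  apply (@is_RInt_minus R_NormedModule (fun y => f1 y - f2 y) (fun y => e * f3 y)).
  apply (@is_RInt_minus R_NormedModule); apply (@RInt_correct R_CompleteNormedModule); auto.
  apply (@is_RInt_scal R_NormedModule). apply (@RInt_correct R_CompleteNormedModule); auto.
Qed.

Lemma RInt_add2 f1 f2 a b : ex_RInt f1 a b -> ex_RInt f2 a b ->
  RInt (fun y => f1 y + f2 y) a b = RInt f1 a b + RInt f2 a b.
Proof.
  intros H1 H2. apply (@is_RInt_unique R_CompleteNormedModule).
  apply (@is_RInt_plus R_NormedModule); apply (@RInt_correct R_CompleteNormedModule); auto.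
Qed.

Lemma RInt_Chasles_R f a b c : ex_RInt f a b -> ex_RInt f b c ->
  RInt f a b + RInt f b c = RInt f a c.
Proof. intros. apply (@RInt_Chasles R_CompleteNormedModule); auto. Qed.

Definition hgood (h : R -> R) (c Mh : R) :=
  0 < c /\ (forall y, c <= Rabs y -> h y = 0) /\
  (forall w, (forall y, continuous w y) -> forall a b, ex_RInt (fun y => w y * h y) a b) /\
  (forall y, Rabs (h y) <= Mh).

Definition RI h P L x := RInt (fun y => kv P (x - y) * h y) (-L) L.
Definition QI h P L x := RInt (fun y => kv P (x - y) * h y) x L.

Lemma ex_kh h c Mh P x a b : hgood h c Mh -> ex_RInt (fun y => kv P (x - y) * h y) a b.
Proof.
  intros [_ [_ [Hw _]]]. apply (Hw (fun y => kv P (x - y))). intros y; apply kv_shift_cont.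
Qed.

Lemma RI_deriv h c Mh P L x : hgood h c Mh -> 0 <= L ->
  is_derive (RI h P L) x (RI h (Dk P) L x).
Proof.
  intros Hh HL. pose proof Hh as [_ [_ [_ HMh]]].
  destruct (kv_bnd (Dk (Dk P)) (Rabs x + L + 1)) as [M2 HM2].
  apply deriv_from_bound with (C := 2 * L * (M2 * Mh)) (d := 1); [lra|].
  intros e He. unfold RI.
  rewrite <- RInt_lin3 by (eapply ex_kh; eauto).
  replace (2 * L * (M2 * Mh) * e ^ 2) with ((L - - L) * (M2 * e ^ 2 * Mh)) by ring.
  apply RInt_bound_open; [lra| |].
  - apply (ex_RInt_ext (fun y => (kv P (x + e - y) - kv P (x - y) - e * kv (Dk P) (x - y)) * h y)).
    intros; rring. 
    apply (proj1 (proj2 (proj2 Hh)) (fun y => kv P (x + e - y) - kv P (x - y) - e * kv (Dk P) (x - y))).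
    intros y. apply (ex_derive_continuous (fun y => kv P (x + e - y) - kv P (x - y) - e * kv (Dk P) (x - y))).
    unfold kv, kf. auto_derive. auto.
  - intros t Ht.
    replace (kv P (x + e - t) * h t - kv P (x - t) * h t - e * (kv (Dk P) (x - t) * h t))
      with ((kv P ((x - t) + e) - kv P (x - t) - e * kv (Dk P) (x - t)) * h t)
      by (replace (x - t + e) with (x + e - t) by ring; ring).
    rewrite Rabs_mult. apply Rmult_le_compat; try apply Rabs_pos.
    + apply kv_taylor with (Rabs x + L + 1); auto; split_Rabs; lra.
    + auto.
Qed.

Lemma QI_deriv h c Mh Q L x : hgood h c Mh -> kv Q 0 = 0 ->
  is_derive (QI h Q L) x (QI h (Dk Q) L x).
Proof.
  intros Hh HQ0. pose proof Hh as [_ [_ [_ HMh]]].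
  set (R0 := Rabs x + Rabs L + 1).
  destruct (kv_bnd (Dk (Dk Q)) R0) as [M2 HM2].
  destruct (kv_bnd (Dk Q) R0) as [M1 HM1].
  assert (HMh0 : 0 <= Mh) by (specialize (HMh 0); pose proof (Rabs_pos (h 0)); lra).
  assert (HM10 : 0 <= M1) by (specialize (HM1 0); rewrite Rabs_R0 in HM1;
     pose proof (Rabs_pos (kv (Dk Q) 0)); apply Rle_trans with (Rabs (kv (Dk Q) 0)); auto; apply HM1; unfold R0; pose proof (Rabs_pos x); pose proof (Rabs_pos L); lra).
  assert (HM20 : 0 <= M2) by (specialize (HM2 0); rewrite Rabs_R0 in HM2;
     pose proof (Rabs_pos (kv (Dk (Dk Q)) 0)); apply Rle_trans with (Rabs (kv (Dk (Dk Q)) 0)); auto; apply HM2; unfold R0; pose proof (Rabs_pos x); pose proof (Rabs_pos L); lra).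
  apply deriv_from_bound with (C := (Rabs (L - x) + 1) * (M2 * Mh) + 2 * (M1 * Mh)) (d := 1); [lra|].
  intros e He. unfold QI.
  set (F0 := fun z y => kv Q (z - y) * h y).
  set (F1 := fun z y => kv (Dk Q) (z - y) * h y).
  change (fun y => kv Q (x - y) * h y) with (F0 x).
  change (fun y => kv (Dk Q) (x - y) * h y) with (F1 x).
  change (fun y => kv Q (x + e - y) * h y) with (F0 (x + e)).
  rewrite <- (RInt_Chasles_R (F0 x) x (x + e) L) by (eapply ex_kh; eauto).
  rewrite <- (RInt_Chasles_R (F1 x) x (x + e) L) by (eapply ex_kh; eauto).
  set (A := RInt (F0 x) x (x + e)). set (B := RInt (F1 x) x (x + e)).
  replace (RInt (F0 (x + e)) (x + e) L - (A + RInt (F0 x) (x + e) L) -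
     e * (B + RInt (F1 x) (x + e) L))
   with ((RInt (F0 (x + e)) (x + e) L - RInt (F0 x) (x + e) L - e * RInt (F1 x) (x + e) L) - A - e * B)
   by ring.
  rewrite <- RInt_lin3 by (unfold F0, F1; eapply ex_kh; eauto).
  assert (HA : Rabs A <= Rabs e * (M1 * Rabs e * Mh)).
  { unfold A. replace (Rabs e) with (Rabs (x + e - x)) at 1 by (f_equal; ring).
    apply RInt_bound_gen. unfold F0; eapply ex_kh; eauto.
    intros t Ht. unfold F0. rewrite Rabs_mult. apply Rmult_le_compat; try apply Rabs_pos; auto.
    replace (kv Q (x - t)) with (kv Q (x - t) - kv Q 0) by (rewrite HQ0; ring).
    assert (Hxt : Rabs (x - t) <= Rabs e) by (unfold Rmin, Rmax in Ht; destruct Rle_dec; split_Rabs; lra).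
    eapply Rle_trans. apply kv_lip with R0; auto. rewrite Rabs_R0; unfold R0; pose proof (Rabs_pos x); pose proof (Rabs_pos L); lra.
    unfold R0; pose proof (Rabs_pos x); pose proof (Rabs_pos L); lra.
    rewrite Rminus_0_r. apply Rmult_le_compat_l; auto. }
  assert (HB : Rabs B <= Rabs e * (M1 * Mh)).
  { unfold B. replace (Rabs e) with (Rabs (x + e - x)) at 1 by (f_equal; ring).
    apply RInt_bound_gen. unfold F1; eapply ex_kh; eauto.
    intros t Ht. unfold F1. rewrite Rabs_mult. apply Rmult_le_compat; try apply Rabs_pos; auto.
    apply HM1. unfold Rmin, Rmax in Ht; destruct Rle_dec; unfold R0; split_Rabs; lra. }
  assert (HC : Rabs (RInt (fun y => F0 (x + e) y - F0 x y - e * F1 x y) (x + e) L)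
     <= Rabs (L - (x + e)) * (M2 * e ^ 2 * Mh)).
  { apply RInt_bound_gen.
    - apply (ex_RInt_ext (fun y => (kv Q (x + e - y) - kv Q (x - y) - e * kv (Dk Q) (x - y)) * h y)).
      intros; unfold F0, F1; rring.
      apply (proj1 (proj2 (proj2 Hh)) (fun y => kv Q (x + e - y) - kv Q (x - y) - e * kv (Dk Q) (x - y))).
      intros y. apply (ex_derive_continuous (fun y => kv Q (x + e - y) - kv Q (x - y) - e * kv (Dk Q) (x - y))).
      unfold kv, kf. auto_derive. auto.
    - intros t Ht. unfold F0, F1.
      replace (kv Q (x + e - t) * h t - kv Q (x - t) * h t - e * (kv (Dk Q) (x - t) * h t))
        with ((kv Q ((x - t) + e) - kv Q (x - t) - e * kv (Dk Q) (x - t)) * h t)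
        by (replace (x - t + e) with (x + e - t) by ring; ring).
      rewrite Rabs_mult. apply Rmult_le_compat; try apply Rabs_pos; auto.
      apply kv_taylor with R0; auto; unfold Rmin, Rmax in Ht; destruct Rle_dec; unfold R0; split_Rabs; lra. }
  assert (Hle : Rabs (L - (x + e)) <= Rabs (L - x) + 1) by (split_Rabs; lra).
  assert (He2 : Rabs e * Rabs e = e ^ 2) by (rewrite <- Rabs_mult; rewrite Rabs_right; [ring| nra]).
  eapply Rle_trans. apply Rabs_triang. eapply Rle_trans. apply Rplus_le_compat_l. 
  rewrite Rabs_Ropp, Rabs_mult. apply Rmult_le_compat_l. apply Rabs_pos. exact HB.
  eapply Rle_trans. apply Rplus_le_compat_r. eapply Rle_trans. apply Rabs_triang.
  apply Rplus_le_compat. exact HC. rewrite Rabs_Ropp. exact HA.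
  assert (0 <= M2 * e^2 * Mh) by (apply Rmult_le_pos; auto; apply Rmult_le_pos; auto; nra).
  assert (Rabs (L - (x + e)) * (M2 * e ^ 2 * Mh) <= (Rabs (L - x) + 1) * (M2 * e ^ 2 * Mh))
    by (apply Rmult_le_compat_r; auto).
  rewrite <- He2 in *. nra.
Qed.
Lemma cD_wcont f s : cont_on_D f -> 0 < s -> wcont (fun y => f y s) (-s) s.
Proof.
  intros Hf Hs y Hy eps He.
  destruct (cD_ed f y s Hf) with (eps := eps) as [d [Hd H]]; auto.
  { split; simpl; auto. split_Rabs; lra. }
  exists d; split; auto. intros z Hz Hzy. apply H; auto. rewrite Rminus_eq_0, Rabs_R0; auto.
  split; simpl; auto. split_Rabs; lra.
Qed.

Lemma ex_RInt_sub (f : R -> R) L a b : ex_RInt f (-L) L -> Rabs a <= L -> Rabs b <= L -> ex_RInt f a b.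
Proof.
  intros H Ha Hb.
  assert (forall u v, u <= v -> Rabs u <= L -> Rabs v <= L -> ex_RInt f u v).
  { intros u v Huv Hu Hv. apply (@ex_RInt_Chasles_1 R_CompleteNormedModule) with L.
    split_Rabs; lra. apply (@ex_RInt_Chasles_2 R_CompleteNormedModule) with (-L); auto. split_Rabs; lra. }
  destruct (Rle_dec a b). auto. apply ex_RInt_swap. apply H0; auto; lra.
Qed.

Lemma hsol_hgood (xcl : R -> R) (phi : R -> R -> R) (t : R) : cont_on_D phi -> 0 < xcl t ->
  exists Mh, hgood (fun y => hsol xcl phi y t) (xcl t) Mh.
Proof.
  intros Hc Hs. set (s := xcl t) in *.
  pose proof (cD_wcont phi s Hc Hs) as Hw.
  set (g := fun y => phi (clamp (-s) s y) s).
  assert (Hg : forall y, continuous g y) by (intros y; apply (wcont_clamp (fun y => phi y s)); auto; lra).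
  assert (Hhg : forall y, Rabs y < s -> hsol xcl phi y t = g y).
  { intros y Hy. unfold hsol, g. fold s. destruct Rlt_dec; [|lra]. rewrite clamp_id; auto. split_Rabs; lra. }
  assert (Hh0 : forall y, s <= Rabs y -> hsol xcl phi y t = 0).
  { intros y Hy. unfold hsol. fold s. destruct Rlt_dec; lra. }
  destruct (bnd_cont g (-s) s) as [M HM]; auto. lra.
  exists (Rabs M). split; [auto|split; [auto|split]].
  - intros w Hwc a b.
    set (L := Rabs a + Rabs b + s).
    apply ex_RInt_sub with L; [| unfold L; pose proof (Rabs_pos a); pose proof (Rabs_pos b); lra ..].
    apply (@ex_RInt_Chasles R_NormedModule) with s; [apply (@ex_RInt_Chasles R_NormedModule) with (-s)|].
    + exists 0. apply zero_piece. intros y Hy. rewrite Hh0. ring.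
      unfold L in Hy. rewrite Rmin_left, Rmax_right in Hy by (pose proof (Rabs_pos a); pose proof (Rabs_pos b); lra).
      split_Rabs; lra.
    + apply ex_RInt_ext with (fun y => w y * g y).
      intros y Hy. rewrite Rmin_left, Rmax_right in Hy by lra. rewrite Hhg; auto. split_Rabs; lra.
      apply (@ex_RInt_continuous R_CompleteNormedModule). intros z _.
      apply (continuous_mult w g); auto.
    + exists 0. apply zero_piece. intros y Hy. rewrite Hh0. ring.
      unfold L in Hy. rewrite Rmin_left, Rmax_right in Hy by (pose proof (Rabs_pos a); pose proof (Rabs_pos b); lra).
      split_Rabs; lra.
  - intros y. destruct (Rlt_dec (Rabs y) s).
    + rewrite Hhg by auto. eapply Rle_trans; [apply HM| apply Rle_abs]. unfold g. split_Rabs; lra.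
    + rewrite Hh0 by lra. rewrite Rabs_R0. apply Rabs_pos.
Qed.
Definition c0 alpha := / (4 * alpha ^ 2).
Definition Kp alpha := mkKP (c0 alpha * alpha) (c0 alpha) (- / alpha) 0 0 0.
Definition Dd alpha := mkKP (c0 alpha * alpha) (- c0 alpha) (/ alpha) (-(c0 alpha * alpha)) (- c0 alpha) (- / alpha).

Lemma K2_pos alpha z : 0 < alpha -> 0 <= z -> K2 alpha z = kv (Kp alpha) z.
Proof.
  intros Ha Hz. unfold K2, kv, kf, Kp, c0; simpl. rewrite Rabs_right by lra.
  replace (- z / alpha) with (- / alpha * z) by (field; lra). ring.
Qed.

Lemma K2_neg alpha z : 0 < alpha -> z <= 0 -> K2 alpha z = kv (Kp alpha) z + kv (Dd alpha) z.
Proof.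
  intros Ha Hz. unfold K2, kv, kf, Kp, Dd, c0; simpl. rewrite Rabs_left1 by lra.
  replace (- - z / alpha) with (/ alpha * z) by (field; lra). ring.
Qed.

Lemma K2_even alpha z : K2 alpha (- z) = K2 alpha z.
Proof. unfold K2. rewrite Rabs_Ropp. reflexivity. Qed.

Lemma K2h_is_RInt alpha h c Mh L x : 0 < alpha -> hgood h c Mh -> Rabs x <= L ->
  is_RInt (fun y => K2 alpha (x - y) * h y) (-L) L (RI h (Kp alpha) L x + QI h (Dd alpha) L x).
Proof.
  intros Ha Hh Hx. unfold RI, QI.
  rewrite <- (RInt_Chasles_R _ (-L) x L) by (eapply ex_kh; eauto).
  replace (RInt (fun y => kv (Kp alpha) (x - y) * h y) (- L) x +
    RInt (fun y => kv (Kp alpha) (x - y) * h y) x L + RInt (fun y => kv (Dd alpha) (x - y) * h y) x L)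
   with (plus (RInt (fun y => kv (Kp alpha) (x - y) * h y) (- L) x)
    (plus (RInt (fun y => kv (Kp alpha) (x - y) * h y) x L) (RInt (fun y => kv (Dd alpha) (x - y) * h y) x L)))
   by (unfold plus; simpl; ring).
  apply (@is_RInt_Chasles R_NormedModule) with x.
  - apply is_RInt_ext with (fun y => kv (Kp alpha) (x - y) * h y).
    + intros y Hy. rewrite Rmin_left, Rmax_right in Hy by (split_Rabs; lra).
      rewrite K2_pos; auto; lra.
    + apply (@RInt_correct R_CompleteNormedModule). eapply ex_kh; eauto.
  - apply is_RInt_ext with (fun y => plus (kv (Kp alpha) (x - y) * h y) (kv (Dd alpha) (x - y) * h y)).
    + intros y Hy. rewrite Rmin_left, Rmax_right in Hy by (split_Rabs; lra).
      rewrite K2_neg by lra. unfold plus; simpl. rring.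
    + apply (@is_RInt_plus R_NormedModule); apply (@RInt_correct R_CompleteNormedModule); eapply ex_kh; eauto.
Qed.

Lemma hbar_s alpha xcl phi t Mh : 0 < alpha -> hgood (fun y => hsol xcl phi y t) (xcl t) Mh ->
  forall x, hbar alpha xcl phi x t = RInt (fun y => K2 alpha (x - y) * hsol xcl phi y t) (- xcl t) (xcl t).
Proof.
  intros Ha Hh x. pose proof Hh as [Hs [Hz _]]. unfold hbar.
  apply supp_RInt_gen; auto.
  - intros y Hy. rewrite Hz; auto. ring.
  - apply ex_RInt_sub with (Rabs x + xcl t).
    + eexists. eapply K2h_is_RInt; eauto. pose proof (Rabs_pos x); lra.
    + rewrite Rabs_Ropp, Rabs_right; pose proof (Rabs_pos x); lra.
    + rewrite Rabs_right; pose proof (Rabs_pos x); lra.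
Qed.

Lemma hbar_rep alpha xcl phi t Mh L x : 0 < alpha -> hgood (fun y => hsol xcl phi y t) (xcl t) Mh ->
  xcl t <= L -> Rabs x <= L ->
  hbar alpha xcl phi x t = RI (fun y => hsol xcl phi y t) (Kp alpha) L x + QI (fun y => hsol xcl phi y t) (Dd alpha) L x.
Proof.
  intros Ha Hh HL Hx. pose proof Hh as [Hs [Hz _]]. rewrite (hbar_s alpha xcl phi t Mh Ha Hh x).
  pose proof (K2h_is_RInt alpha _ _ Mh L x Ha Hh Hx) as H1.
  assert (H2 : is_RInt (fun y => K2 alpha (x - y) * hsol xcl phi y t) (-L) L
      (RInt (fun y => K2 alpha (x - y) * hsol xcl phi y t) (- xcl t) (xcl t))).
  { apply supp_is_RInt; auto; try lra.
    - intros y Hy. rewrite Hz; auto. ring.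
    - apply ex_RInt_sub with L. eexists; eauto. rewrite Rabs_Ropp, Rabs_right; lra. rewrite Rabs_right; lra. }
  apply (@is_RInt_unique R_CompleteNormedModule) in H1.
  apply (@is_RInt_unique R_CompleteNormedModule) in H2. congruence.
Qed.

Lemma hsol_even xcl phi t y : even_in_x phi -> 0 < xcl t -> hsol xcl phi (- y) t = hsol xcl phi y t.
Proof.
  intros He Hs. unfold hsol. rewrite Rabs_Ropp. destruct Rlt_dec; auto. apply He; auto. lra.
Qed.

Lemma K2h_ex alpha h c Mh x : 0 < alpha -> hgood h c Mh -> ex_RInt (fun y => K2 alpha (x - y) * h y) (-c) c.
Proof.
  intros Ha Hh. pose proof Hh as [Hs _].
  apply ex_RInt_sub with (Rabs x + c).
  + eexists. eapply K2h_is_RInt; eauto. pose proof (Rabs_pos x); lra.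
  + rewrite Rabs_Ropp, Rabs_right; pose proof (Rabs_pos x); lra.
  + rewrite Rabs_right; pose proof (Rabs_pos x); lra.
Qed.

Lemma hbar_even alpha xcl phi t Mh : 0 < alpha -> even_in_x phi -> hgood (fun y => hsol xcl phi y t) (xcl t) Mh ->
  forall x, hbar alpha xcl phi (- x) t = hbar alpha xcl phi x t.
Proof.
  intros Ha He Hh x. pose proof Hh as [Hs _].
  rewrite !(hbar_s alpha xcl phi t Mh Ha Hh).
  set (s := xcl t) in *.
  set (f := fun y => K2 alpha (x - y) * hsol xcl phi y t).
  assert (Hex : ex_RInt f (- s) s) by (unfold f; eapply K2h_ex; eauto).
  set (l := RInt f (-s) s).
  assert (H1 : is_RInt f s (-s) (opp l)).
  { apply (@is_RInt_swap R_NormedModule). apply (@RInt_correct R_CompleteNormedModule). auto. }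
  assert (H2 : is_RInt (fun y => scal (-1) (f (-1 * y + 0))) (-s) s (opp l)).
  { apply (@is_RInt_comp_lin R_NormedModule). replace (-1 * - s + 0) with s by ring.
    replace (-1 * s + 0) with (-s) by ring. exact H1. }
  apply (@is_RInt_unique R_CompleteNormedModule).
  replace l with (opp (opp l)) by apply opp_opp.
  apply (@is_RInt_ext R_NormedModule) with (fun y => opp (scal (-1) (f (-1 * y + 0)))).
  - intros y _. unfold f, opp, scal; simpl. unfold mult; simpl.
    replace (x - (-1 * y + 0)) with (-(-x - y)) by ring. rewrite K2_even.
    replace (-1 * y + 0) with (-y) by ring. rewrite hsol_even; auto. ring.
  - apply (@is_RInt_opp R_NormedModule). exact H2.
Qed.
Lemma step_deriv h c Mh (f : R -> R) P Q L : hgood h c Mh -> 0 <= L -> kv Q 0 = 0 ->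
  (forall x, Rabs x < L -> f x = RI h P L x + QI h Q L x) ->
  forall x, Rabs x < L -> is_derive f x (RI h (Dk P) L x + QI h (Dk Q) L x).
Proof.
  intros Hh HL HQ Hf x Hx.
  apply is_derive_ext_loc with (fun y => RI h P L y + QI h Q L y).
  - assert (Hd : 0 < L - Rabs x) by lra. exists (mkposreal _ Hd). intros y Hy. symmetry. apply Hf.
    simpl in Hy. unfold ball in Hy; simpl in Hy. unfold AbsRing_ball, abs, minus, plus, opp in Hy; simpl in Hy.
    split_Rabs; lra.
  - apply (is_derive_plus (RI h P L) (QI h Q L)). eapply RI_deriv; eauto. eapply QI_deriv; eauto.
Qed.

Fixpoint itD n P := match n with O => P | S n => Dk (itD n P) end.

Lemma itD_zero alpha n : 0 < alpha -> (n <= 2)%nat -> kv (itD n (Dd alpha)) 0 = 0.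
Proof.
  intros Ha Hn. destruct n as [|[|[|n]]]; [..|exfalso; lia];
  unfold kv, kf, Dd, Dk, c0; simpl; rewrite !Rmult_0_r, exp_0; field; lra.
Qed.

Lemma rep_all alpha xcl phi t Mh L : 0 < alpha -> hgood (fun y => hsol xcl phi y t) (xcl t) Mh ->
  xcl t <= L -> forall n, (n <= 3)%nat -> forall x, Rabs x < L ->
  Derive_n (fun y => hbar alpha xcl phi y t) n x =
    RI (fun y => hsol xcl phi y t) (itD n (Kp alpha)) L x + QI (fun y => hsol xcl phi y t) (itD n (Dd alpha)) L x.
Proof.
  intros Ha Hh HL n. pose proof Hh as [Hs _]. induction n as [|n IH]; intros Hn x Hx.
  - simpl. apply hbar_rep with Mh; auto; lra.
  - change (Derive_n (fun y => hbar alpha xcl phi y t) (S n) x) with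
      (Derive (Derive_n (fun y => hbar alpha xcl phi y t) n) x).
    apply is_derive_unique. simpl itD.
    eapply step_deriv; eauto. lra. apply itD_zero; auto. lia.
    intros; apply IH; auto. lia.
Qed.

Lemma ex_der_all alpha xcl phi t Mh : 0 < alpha -> hgood (fun y => hsol xcl phi y t) (xcl t) Mh ->
  forall n, (n <= 2)%nat -> forall x, ex_derive (Derive_n (fun y => hbar alpha xcl phi y t) n) x.
Proof.
  intros Ha Hh n Hn x. pose proof Hh as [Hs _].
  set (L := Rabs x + xcl t + 1).
  assert (HL : xcl t + 1 <= L) by (unfold L; pose proof (Rabs_pos x); lra).
  eexists. apply (step_deriv _ (xcl t) Mh _ (itD n (Kp alpha)) (itD n (Dd alpha)) L Hh).
  lra. apply itD_zero; auto.
  intros y Hy; apply rep_all with Mh; auto; try lra; try lia.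
  unfold L; pose proof (Rabs_pos x); lra.
Qed.

Lemma deriv_par (f : R -> R) sg : sg * sg = 1 -> (forall x, f (- x) = sg * f x) ->
  (forall x, ex_derive f x) -> forall x, Derive f (- x) = - sg * Derive f x.
Proof.
  intros Hs Hf Hd x.
  assert (E : Derive f x = Derive (fun y => sg * f (- y)) x).
  { apply Derive_ext. intros y. rewrite Hf. rewrite <- Rmult_assoc, Hs. ring. }
  rewrite Derive_scal in E.
  rewrite (Derive_comp f Ropp x) in E; auto.
  2:{ change (ex_derive (fun y => - y) x). auto_derive. auto. }
  assert (Hop : Derive Ropp x = -1).
  { change (Derive (fun y => - y) x = -1). apply is_derive_unique. auto_derive; auto; ring. }
  rewrite Hop in E.
  rewrite E. replace (- sg * (sg * (- 1 * Derive f (- x)))) with ((sg * sg) * Derive f (- x)) by ring.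
  rewrite Hs. ring.
Qed.

Lemma num_aux (X : R) : - (- - (1)) * X = - X.
Proof. ring. Qed.

Lemma hxxx_odd alpha xcl phi t Mh : 0 < alpha -> even_in_x phi -> hgood (fun y => hsol xcl phi y t) (xcl t) Mh ->
  forall x, hbar_xxx alpha xcl phi (- x) t = - hbar_xxx alpha xcl phi x t.
Proof.
  intros Ha He Hh x. unfold hbar_xxx.
  assert (X0 := ex_der_all alpha xcl phi t Mh Ha Hh 0%nat ltac:(lia)).
  assert (X1 := ex_der_all alpha xcl phi t Mh Ha Hh 1%nat ltac:(lia)).
  assert (X2 := ex_der_all alpha xcl phi t Mh Ha Hh 2%nat ltac:(lia)).
  assert (E0 : forall y, Derive_n (fun y => hbar alpha xcl phi y t) 0 (- y) = 1 * Derive_n (fun y => hbar alpha xcl phi y t) 0 y).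
  { intros y. change (hbar alpha xcl phi (- y) t = 1 * hbar alpha xcl phi y t). rewrite (hbar_even alpha xcl phi t Mh); auto. ring. }
  assert (E1 := deriv_par _ 1 ltac:(ring) E0 X0).
  assert (E2 := deriv_par _ (- (1)) ltac:(ring) E1 X1).
  assert (E3 := deriv_par _ (- - (1)) ltac:(ring) E2 X2 x).
  change (Derive (Derive_n (fun y => hbar alpha xcl phi y t) 2) (- x) = - Derive (Derive_n (fun y => hbar alpha xcl phi y t) 2) x).
  etransitivity; [exact E3| apply num_aux].
Qed.
Lemma RInt_minus_const (f : R -> R) a b c : ex_RInt f a b ->
  RInt (fun y => f y - c) a b = RInt f a b - (b - a) * c.
Proof.
  intros H. apply (@is_RInt_unique R_CompleteNormedModule).
  apply (@is_RInt_minus R_NormedModule f (fun _ => c)).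
  apply (@RInt_correct R_CompleteNormedModule); auto.
  apply (@is_RInt_const R_NormedModule).
Qed.

Lemma unif_phis (g : R -> R -> R) s0 : cont_on_D g -> 0 < s0 -> forall eps, 0 < eps ->
  exists d, 0 < d /\ forall y r, -s0 <= y <= s0 -> s0 <= r < s0 + d -> Rabs (g y r - g y s0) < eps.
Proof.
  intros Hg Hs eps He.
  assert (Hex : forall t, exists d : posreal, -s0 <= t <= s0 -> forall y r, Rabs (y - t) < d ->
     Rabs (r - s0) < d -> domD (y, r) -> Rabs (g y r - g t s0) < eps / 2).
  { intros t. destruct (Rle_dec (-s0) t); [destruct (Rle_dec t s0)|].
    - destruct (cD_ed g t s0 Hg) with (eps := eps / 2) as [d [Hd H]].
      split; simpl; auto. split_Rabs; lra. lra.
      exists (mkposreal d Hd). intros _. exact H.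
    - exists (mkposreal 1 Rlt_0_1). intros; lra.
    - exists (mkposreal 1 Rlt_0_1). intros; lra. }
  set (delta := fun t => proj1_sig (constructive_indefinite_description _ (Hex t))).
  assert (Hdelta : forall t, -s0 <= t <= s0 -> forall y r, Rabs (y - t) < delta t ->
     Rabs (r - s0) < delta t -> domD (y, r) -> Rabs (g y r - g t s0) < eps / 2).
  { intros t. unfold delta. destruct (constructive_indefinite_description _ (Hex t)) as [d Hd]. simpl. exact Hd. }
  destruct (compactness_value_1d (-s0) s0 delta) as [d Hd].
  exists d. split. apply cond_pos. intros y r Hy Hr.
  apply Classical_Prop.NNPP. intros Hn. apply (Hd y Hy). intros [t [Ht [H1 H2]]]. apply Hn.
  assert (A1 : Rabs (g y r - g t s0) < eps / 2).
  { apply Hdelta; auto. split_Rabs; lra. split; simpl; split_Rabs; lra. }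
  assert (A2 : Rabs (g y s0 - g t s0) < eps / 2).
  { apply Hdelta; auto. rewrite Rminus_eq_0, Rabs_R0. apply cond_pos. split; simpl; split_Rabs; lra. }
  replace (g y r - g y s0) with ((g y r - g t s0) - (g y s0 - g t s0)) by ring.
  eapply Rle_lt_trans. apply Rabs_triang. rewrite Rabs_Ropp. lra.
Qed.

Definition Mfun (phi : R -> R -> R) s := RInt (fun y => phi y s) (-s) s.

Lemma mass_rep xcl phi t : cont_on_D phi -> 0 < xcl t -> mass xcl phi t = Mfun phi (xcl t).
Proof.
  intros Hc Hs. unfold mass, Mfun.
  assert (Hex : ex_RInt (fun y => phi y (xcl t)) (- xcl t) (xcl t)).
  { apply wcont_ex_RInt. lra. apply cD_wcont; auto. }
  assert (Hext : forall y, Rmin (- xcl t) (xcl t) < y < Rmax (- xcl t) (xcl t) ->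
     phi y (xcl t) = hsol xcl phi y t).
  { intros y Hy. rewrite Rmin_left, Rmax_right in Hy by lra. unfold hsol. destruct Rlt_dec; auto.
    exfalso; apply n; split_Rabs; lra. }
  rewrite (supp_RInt_gen _ (xcl t)); auto.
  - symmetry. apply RInt_ext. auto.
  - intros y Hy. unfold hsol. destruct Rlt_dec; lra.
  - apply ex_RInt_ext with (fun y => phi y (xcl t)); auto.
Qed.
Lemma mass_est phi phis s0 : cont_on_D phi -> cont_on_D phis ->
  (forall x s, 0 < s -> Rabs x < s -> is_derive (fun r => phi x r) s (phis x s)) ->
  even_in_x phi -> 0 < s0 -> forall eps, 0 < eps -> exists d, 0 < d /\ forall s, s0 < s < s0 + d ->
  Rabs (Mfun phi s - Mfun phi s0 - (s - s0) * (2 * phi s0 s0 + RInt (fun y => phis y s0) (-s0) s0))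
    <= (s - s0) * (eps * (2 + 2 * s0)).
Proof.
  intros Hc Hcs Hder Hev Hs0 eps He.
  destruct (cD_ed phi s0 s0 Hc) with (eps := eps) as [d1 [Hd1 H1]]; auto.
  { split; simpl; auto. rewrite Rabs_right; lra. }
  destruct (cD_ed phi (-s0) s0 Hc) with (eps := eps) as [d2 [Hd2 H2]]; auto.
  { split; simpl; auto. rewrite Rabs_Ropp, Rabs_right; lra. }
  destruct (unif_phis phis s0 Hcs Hs0 eps He) as [d3 [Hd3 H3]].
  exists (Rmin d1 (Rmin d2 d3)). split. repeat apply Rmin_pos; auto.
  intros s Hs.
  assert (Hm1 : s - s0 < d1) by (pose proof (Rmin_l d1 (Rmin d2 d3)); lra).
  assert (Hm2 : s - s0 < d2) by (pose proof (Rmin_r d1 (Rmin d2 d3)); pose proof (Rmin_l d2 d3); lra).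
  assert (Hm3 : s - s0 < d3) by (pose proof (Rmin_r d1 (Rmin d2 d3)); pose proof (Rmin_r d2 d3); lra).
  assert (Hexs : ex_RInt (fun y => phi y s) (-s) s) by (apply wcont_ex_RInt; [lra| apply cD_wcont; auto; lra]).
  assert (Hex0 : ex_RInt (fun y => phi y s0) (-s0) s0) by (apply wcont_ex_RInt; [lra| apply cD_wcont; auto; lra]).
  assert (Hexp : ex_RInt (fun y => phis y s0) (-s0) s0) by (apply wcont_ex_RInt; [lra| apply cD_wcont; auto; lra]).
  assert (Hsub : forall a b, Rabs a <= s -> Rabs b <= s -> ex_RInt (fun y => phi y s) a b)
    by (intros; apply ex_RInt_sub with s; auto).
  assert (Ha0 : Rabs (-s) <= s) by (rewrite Rabs_Ropp, Rabs_right; lra).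
  assert (Ha1 : Rabs (-s0) <= s) by (rewrite Rabs_Ropp, Rabs_right; lra).
  assert (Ha2 : Rabs s0 <= s) by (rewrite Rabs_right; lra).
  assert (Ha3 : Rabs s <= s) by (rewrite Rabs_right; lra).
  unfold Mfun.
  rewrite <- (RInt_Chasles_R _ (-s) (-s0) s) by auto.
  rewrite <- (RInt_Chasles_R _ (-s0) s0 s) by auto.
  set (A := RInt (fun y => phi y s - phi (-s0) s0) (-s) (-s0)).
  set (B := RInt (fun y => phi y s - phi y s0 - (s - s0) * phis y s0) (-s0) s0).
  set (C := RInt (fun y => phi y s - phi s0 s0) s0 s).
  assert (EA : A = RInt (fun y => phi y s) (-s) (-s0) - (s - s0) * phi s0 s0).
  { unfold A. rewrite RInt_minus_const by auto. rewrite Hev by (auto; rewrite Rabs_right; lra). rring. }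
  assert (EC : C = RInt (fun y => phi y s) s0 s - (s - s0) * phi s0 s0).
  { unfold C. rewrite RInt_minus_const by auto. rring. }
  assert (EB : B = RInt (fun y => phi y s) (-s0) s0 - RInt (fun y => phi y s0) (-s0) s0 -
      (s - s0) * RInt (fun y => phis y s0) (-s0) s0).
  { unfold B. apply RInt_lin3; auto. }
  replace (RInt (fun y => phi y s) (-s) (-s0) + (RInt (fun y => phi y s) (-s0) s0 + RInt (fun y => phi y s) s0 s) -
    RInt (fun y => phi y s0) (-s0) s0 - (s - s0) * (2 * phi s0 s0 + RInt (fun y => phis y s0) (-s0) s0))
    with (A + B + C) by (rewrite EA, EB, EC; ring).
  assert (BA : Rabs A <= (- s0 - - s) * eps).
  { apply RInt_bound_open; [lra| |].
    - apply (ex_RInt_minus (V := R_NormedModule) (fun y => phi y s) (fun _ => phi (-s0) s0)); auto.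
      apply ex_RInt_const.
    - intros y Hy. left. apply H2. split_Rabs; lra. split_Rabs; lra. split; simpl; split_Rabs; lra. }
  assert (BC : Rabs C <= (s - s0) * eps).
  { apply RInt_bound_open; [lra| |].
    - apply (ex_RInt_minus (V := R_NormedModule) (fun y => phi y s) (fun _ => phi s0 s0)); auto.
      apply ex_RInt_const.
    - intros y Hy. left. apply H1. split_Rabs; lra. split_Rabs; lra. split; simpl; split_Rabs; lra. }
  assert (BB : Rabs B <= (s0 - - s0) * (eps * (s - s0))).
  { apply RInt_bound_open; [lra| |].
    -
      apply (ex_RInt_minus (V := R_NormedModule) (fun y => phi y s - phi y s0) (fun y => (s - s0) * phis y s0)).
      apply (ex_RInt_minus (V := R_NormedModule)); auto.
      apply (ex_RInt_scal (V := R_NormedModule) (fun y => phis y s0)); auto.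
    - intros y Hy.
      destruct (MVT_gen (fun r => phi y r) s0 s (fun r => phis y r)) as [c [Hcc E]].
      + intros x Hx. rewrite Rmin_left, Rmax_right in Hx by lra. apply Hder; [lra| split_Rabs; lra].
      + intros x Hx. rewrite Rmin_left, Rmax_right in Hx by lra. apply continuity_pt_filterlim.
        apply (ex_derive_continuous (fun r => phi y r)). eexists. apply Hder; [lra| split_Rabs; lra].
      + rewrite Rmin_left, Rmax_right in Hcc by lra. rewrite E.
        replace (phis y c * (s - s0) - (s - s0) * phis y s0) with ((phis y c - phis y s0) * (s - s0)) by ring.
        rewrite Rabs_mult, (Rabs_right (s - s0)) by lra. apply Rmult_le_compat_r; [lra|].
        left. apply H3; lra. }
  eapply Rle_trans. apply Rabs_triang. eapply Rle_trans. apply Rplus_le_compat_r. apply Rabs_triang.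
  nra.
Qed.

Lemma mass_zero phi phis s0 : cont_on_D phi -> cont_on_D phis ->
  (forall x s, 0 < s -> Rabs x < s -> is_derive (fun r => phi x r) s (phis x s)) ->
  even_in_x phi -> 0 < s0 ->
  (forall d, 0 < d -> exists s, s0 < s < s0 + d /\ Mfun phi s = Mfun phi s0) ->
  2 * phi s0 s0 + RInt (fun y => phis y s0) (-s0) s0 = 0.
Proof.
  intros Hc Hcs Hder Hev Hs0 Hseq.
  set (L0 := 2 * phi s0 s0 + RInt (fun y => phis y s0) (-s0) s0).
  assert (HK : forall eps, 0 < eps -> Rabs L0 <= eps * (2 + 2 * s0)).
  { intros eps He. destruct (mass_est phi phis s0 Hc Hcs Hder Hev Hs0 eps He) as [d [Hd H]].
    destruct (Hseq d Hd) as [s [Hs E]]. specialize (H s Hs). fold L0 in H. rewrite E in H.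
    replace (Mfun phi s0 - Mfun phi s0 - (s - s0) * L0) with (- ((s - s0) * L0)) in H by ring.
    rewrite Rabs_Ropp, Rabs_mult, (Rabs_right (s - s0)) in H by lra.
    apply Rmult_le_reg_l with (s - s0); lra. }
  destruct (Req_dec L0 0) as [|Hn]; auto. exfalso.
  assert (Hp : 0 < Rabs L0) by (apply Rabs_pos_lt; auto).
  specialize (HK (Rabs L0 / (2 * (2 + 2 * s0)))).
  assert (HK' : Rabs L0 <= Rabs L0 / (2 * (2 + 2 * s0)) * (2 + 2 * s0)) by (apply HK; apply Rdiv_lt_0_compat; lra).
  replace (Rabs L0 / (2 * (2 + 2 * s0)) * (2 + 2 * s0)) with (Rabs L0 / 2) in HK' by (field; lra).
  lra.
Qed.
Lemma small_zero X C : (forall eps, 0 < eps -> Rabs X <= C * eps) -> X = 0.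
Proof.
  intros H. destruct (Req_dec X 0) as [|Hn]; auto. exfalso.
  assert (Hp : 0 < Rabs X) by (apply Rabs_pos_lt; auto).
  assert (HC : 0 < C). { specialize (H 1 Rlt_0_1). lra. }
  specialize (H (Rabs X / (2 * C))). 
  assert (Rabs X <= C * (Rabs X / (2 * C))) by (apply H; apply Rdiv_lt_0_compat; lra).
  replace (C * (Rabs X / (2 * C))) with (Rabs X / 2) in H0 by (field; lra). lra.
Qed.

Lemma flux_ftc (F G : R -> R) s0 k : 0 < s0 ->
  (forall x, Rabs x < s0 -> is_derive F x (k * G x)) ->
  (forall x, Rabs x < s0 -> continuous G x) -> wcont G (-s0) s0 ->
  (forall eps, 0 < eps -> exists d, 0 < d /\ forall y, Rabs (y - s0) < d -> Rabs y <= s0 -> Rabs (F y - F s0) < eps) ->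
  (forall eps, 0 < eps -> exists d, 0 < d /\ forall y, Rabs (y - - s0) < d -> Rabs y <= s0 -> Rabs (F y - F (-s0)) < eps) ->
  F s0 - F (-s0) = k * RInt G (-s0) s0.
Proof.
  intros Hs HF HG Hw Hr Hl.
  destruct (wcont_bnd G (-s0) s0) as [MG HMG]; auto. lra.
  assert (HexG : ex_RInt G (-s0) s0) by (apply wcont_ex_RInt; auto; lra).
  apply Rminus_diag_uniq. apply (small_zero _ 4). intros eps He.
  destruct (Hr eps He) as [d1 [Hd1 H1]]. destruct (Hl eps He) as [d2 [Hd2 H2]].
  set (K := Rabs k * Rabs MG + 1).
  assert (HK : 0 < K) by (unfold K; pose proof (Rabs_pos k); pose proof (Rabs_pos MG); nra).
  set (m := Rmin (Rmin d1 d2) (Rmin s0 (eps / K))).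
  assert (HeK : 0 < eps / K) by (apply Rdiv_lt_0_compat; lra).
  assert (Hm0 : 0 < m) by (unfold m; repeat apply Rmin_pos; lra).
  assert (Hm1 : m <= d1) by (unfold m; pose proof (Rmin_l (Rmin d1 d2) (Rmin s0 (eps / K))); pose proof (Rmin_l d1 d2); lra).
  assert (Hm2 : m <= d2) by (unfold m; pose proof (Rmin_l (Rmin d1 d2) (Rmin s0 (eps / K))); pose proof (Rmin_r d1 d2); lra).
  assert (Hm3 : m <= s0) by (unfold m; pose proof (Rmin_r (Rmin d1 d2) (Rmin s0 (eps / K))); pose proof (Rmin_l s0 (eps / K)); lra).
  assert (Hm4 : m <= eps / K) by (unfold m; pose proof (Rmin_r (Rmin d1 d2) (Rmin s0 (eps / K))); pose proof (Rmin_r s0 (eps / K)); lra).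
  set (eta := m / 2).
  assert (Heta : 0 < eta) by (unfold eta; lra).
  assert (Heta1 : eta < d1) by (unfold eta; lra).
  assert (Heta2 : eta < d2) by (unfold eta; lra).
  assert (Heta3 : eta < s0) by (unfold eta; lra).
  assert (Heta4 : eta * K <= eps).
  { assert (eta <= eps / K) by (unfold eta; lra).
    apply Rmult_le_reg_r with (/ K). apply Rinv_0_lt_compat; auto.
    replace (eta * K * / K) with eta by (field; lra). auto. }
  set (a := - s0 + eta). set (b := s0 - eta).
  assert (HkG : ex_RInt (fun x => k * G x) (-s0) s0) by (apply (ex_RInt_scal (V := R_NormedModule)); auto).
  assert (Hsub : forall u v, Rabs u <= s0 -> Rabs v <= s0 -> ex_RInt (fun x => k * G x) u v)
    by (intros; apply ex_RInt_sub with s0; auto).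
  assert (Hmid : RInt (fun x => k * G x) a b = F b - F a).
  { apply (@is_RInt_unique R_CompleteNormedModule).
    apply (is_RInt_derive (V := R_CompleteNormedModule) F (fun x => k * G x)).
    - intros x Hx. rewrite Rmin_left, Rmax_right in Hx by (unfold a, b; lra). apply HF. unfold a, b in Hx; split_Rabs; lra.
    - intros x Hx. rewrite Rmin_left, Rmax_right in Hx by (unfold a, b; lra).
      apply (continuous_mult (fun _ => k) G). apply continuous_const. apply HG. unfold a, b in Hx; split_Rabs; lra. }
  assert (Htot : k * RInt G (-s0) s0 = RInt (fun x => k * G x) (-s0) a + (F b - F a) + RInt (fun x => k * G x) b s0).
  { rewrite <- Hmid. rewrite (RInt_Chasles_R _ (-s0) a b), (RInt_Chasles_R _ (-s0) b s0).
    symmetry. apply (RInt_scal (V := R_CompleteNormedModule) G). auto.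
    all: apply Hsub; unfold a, b; split_Rabs; lra. }
  assert (B1 : Rabs (RInt (fun x => k * G x) (-s0) a) <= eps).
  { eapply Rle_trans. apply RInt_bound_open with (M := Rabs k * Rabs MG). unfold a; lra.
    apply Hsub; unfold a; split_Rabs; lra.
    intros t Ht. rewrite Rabs_mult. apply Rmult_le_compat_l. apply Rabs_pos.
    eapply Rle_trans. apply HMG. unfold a in Ht; lra. apply Rle_abs.
    unfold a. replace (- s0 + eta - - s0) with eta by ring. unfold K in Heta4.
    pose proof (Rabs_pos k); pose proof (Rabs_pos MG). nra. }
  assert (B2 : Rabs (RInt (fun x => k * G x) b s0) <= eps).
  { eapply Rle_trans. apply RInt_bound_open with (M := Rabs k * Rabs MG). unfold b; lra.
    apply Hsub; unfold b; split_Rabs; lra.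
    intros t Ht. rewrite Rabs_mult. apply Rmult_le_compat_l. apply Rabs_pos.
    eapply Rle_trans. apply HMG. unfold b in Ht; lra. apply Rle_abs.
    unfold b. replace (s0 - (s0 - eta)) with eta by ring. unfold K in Heta4.
    pose proof (Rabs_pos k); pose proof (Rabs_pos MG). nra. }
  assert (B3 : Rabs (F b - F s0) < eps) by (apply H1; unfold b; split_Rabs; lra).
  assert (B4 : Rabs (F a - F (-s0)) < eps) by (apply H2; unfold a; split_Rabs; lra).
  rewrite Htot.
  replace (F s0 - F (- s0) - (RInt (fun x => k * G x) (- s0) a + (F b - F a) + RInt (fun x => k * G x) b s0))
    with (- (F b - F s0) + (F a - F (-s0)) - RInt (fun x => k * G x) (- s0) a - RInt (fun x => k * G x) b s0) by ring.
  unfold Rminus. eapply Rle_trans. apply Rabs_triang. rewrite Rabs_Ropp.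
  eapply Rle_trans. apply Rplus_le_compat_r. apply Rabs_triang. rewrite Rabs_Ropp.
  eapply Rle_trans. apply Rplus_le_compat_r. apply Rplus_le_compat_r. apply Rabs_triang. rewrite Rabs_Ropp.
  unfold Rminus in B3, B4. lra.
Qed.
Lemma in_I_open a b t0 : in_I a b t0 -> exists d, 0 < d /\ forall t, Rabs (t - t0) < d -> in_I a b t.
Proof.
  intros [Ha Hb].
  assert (Hl : exists d, 0 < d /\ forall t, Rabs (t - t0) < d -> Rbar_lt a t).
  { destruct a as [a| |]; simpl in Ha.
    - exists (t0 - a). split. lra. intros t Ht. simpl. split_Rabs; lra.
    - contradiction.
    - exists 1. split. lra. intros; simpl; auto. }
  assert (Hr : exists d, 0 < d /\ forall t, Rabs (t - t0) < d -> Rbar_lt t b).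
  { destruct b as [b| |]; simpl in Hb.
    - exists (b - t0). split. lra. intros t Ht. simpl. split_Rabs; lra.
    - exists 1. split. lra. intros; simpl; auto.
    - contradiction. }
  destruct Hl as [d1 [Hd1 H1]]. destruct Hr as [d2 [Hd2 H2]].
  exists (Rmin d1 d2). split. apply Rmin_pos; auto. intros t Ht. split.
  apply H1. pose proof (Rmin_l d1 d2); lra. apply H2. pose proof (Rmin_r d1 d2); lra.
Qed.

Lemma near_vals (f : R -> R) t0 l (P : R -> Prop) : is_derive f t0 l -> l <> 0 ->
  (exists d, 0 < d /\ forall t, Rabs (t - t0) < d -> P t) ->
  forall d, 0 < d -> exists t, P t /\ f t0 < f t < f t0 + d.
Proof.
  intros Hd Hl [dI [HdI HP]] d Hdp.
  apply is_derive_Reals in Hd.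
  assert (Hla : 0 < Rabs l) by (apply Rabs_pos_lt; auto).
  destruct (Hd (Rabs l / 2)) as [del Hdel]. lra.
  assert (Hq : 0 < d / (2 * Rabs l)) by (apply Rdiv_lt_0_compat; lra).
  set (m := Rmin (Rmin del dI) (d / (2 * Rabs l))).
  assert (Hm0 : 0 < m) by (unfold m; repeat apply Rmin_pos; try apply cond_pos; lra).
  assert (Hm1 : m <= del) by (unfold m; pose proof (Rmin_l (Rmin del dI) (d / (2 * Rabs l))); pose proof (Rmin_l del dI); lra).
  assert (Hm2 : m <= dI) by (unfold m; pose proof (Rmin_l (Rmin del dI) (d / (2 * Rabs l))); pose proof (Rmin_r del dI); lra).
  assert (Hm3 : m <= d / (2 * Rabs l)) by (unfold m; apply Rmin_r).
  assert (Hm3' : m * (2 * Rabs l) <= d).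
  { apply Rmult_le_reg_r with (/ (2 * Rabs l)). apply Rinv_0_lt_compat; lra.
    replace (m * (2 * Rabs l) * / (2 * Rabs l)) with m by (field; lra). auto. }
  set (hm := m / 2).
  destruct (Rlt_dec 0 l) as [Hlp|Hln].
  - exists (t0 + hm). split. apply HP. replace (t0 + hm - t0) with hm by ring. unfold hm; rewrite Rabs_right; lra.
    assert (Hh : Rabs hm < del) by (unfold hm; rewrite Rabs_right; lra).
    specialize (Hdel hm ltac:(unfold hm; lra) Hh).
    set (q := (f (t0 + hm) - f t0) / hm) in Hdel.
    assert (E : f (t0 + hm) - f t0 = q * hm) by (unfold q; field; unfold hm; lra).
    rewrite Rabs_right in Hm3' by lra. rewrite (Rabs_right l) in Hdel by lra.
    assert (l / 2 < q < 3 * l / 2) by (split_Rabs; lra).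
    assert (Hhm : 0 < hm) by (unfold hm; lra).
    assert (P1 : 0 < q * hm) by (apply Rmult_lt_0_compat; lra).
    assert (P2 : q * hm <= 3 * l / 2 * hm) by (apply Rmult_le_compat_r; lra).
    assert (P3 : 3 * l / 2 * hm < d) by (unfold hm; nra).
    lra.
  - assert (Hln' : l < 0) by (destruct (Rle_lt_or_eq_dec l 0); [lra| |]; auto; lra).
    exists (t0 - hm). split. apply HP. replace (t0 - hm - t0) with (- hm) by ring. rewrite Rabs_Ropp. unfold hm; rewrite Rabs_right; lra.
    assert (Hh : Rabs (- hm) < del) by (rewrite Rabs_Ropp; unfold hm; rewrite Rabs_right; lra).
    specialize (Hdel (- hm) ltac:(unfold hm; lra) Hh).
    set (q := (f (t0 + - hm) - f t0) / - hm) in Hdel.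
    assert (E : f (t0 - hm) - f t0 = - q * hm) by (unfold q; unfold Rminus; field; unfold hm; lra).
    rewrite Rabs_left in Hm3' by lra. rewrite (Rabs_left l) in Hdel by lra.
    assert (3 * l / 2 < q < l / 2) by (split_Rabs; lra).
    assert (Hhm : 0 < hm) by (unfold hm; lra).
    assert (P1 : 0 < - q * hm) by (apply Rmult_lt_0_compat; lra).
    assert (P2 : - q * hm <= - (3 * l / 2) * hm) by (apply Rmult_le_compat_r; lra).
    assert (P3 : - (3 * l / 2) * hm < d) by (unfold hm; nra).
    lra.
Qed.
Theorem mainTheorem3
  (alpha gamma mu : R) (a b : Rbar) (xcl : R -> R) (phi : R -> R -> R) (t0 : R) :
  0 < alpha -> 0 < gamma -> 0 < mu ->
  (forall t, in_I a b t -> 0 < xcl t) ->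
  (forall t, in_I a b t -> ex_derive xcl t) ->
  C1_on_D phi -> smooth_in_x phi -> even_in_x phi ->
  (forall t1 t2, in_I a b t1 -> in_I a b t2 -> mass xcl phi t1 = mass xcl phi t2) ->
  (forall t, in_I a b t -> forall x, Rabs x < xcl t ->
     ex_derive (fun y => flux alpha gamma mu xcl phi y t) x /\
     Derive xcl t * Derive (fun r => phi x r) (xcl t)
       + Derive (fun y => flux alpha gamma mu xcl phi y t) x = 0) ->
  (forall t, in_I a b t -> forall x, Rabs x <= xcl t ->
     filterlim (fun y => flux alpha gamma mu xcl phi y t)
       (within (fun y => Rabs y <= xcl t) (locally x))
       (locally (flux alpha gamma mu xcl phi x t))) ->
  in_I a b t0 ->
  Derive xcl t0 <> 0 ->
  phi (xcl t0) (xcl t0) <> 0 ->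
  Derive xcl t0 =
    mob gamma mu (hbar alpha xcl phi (xcl t0) t0) * hbar_xxx alpha xcl phi (xcl t0) t0.
Proof.
  intros Ha Hg Hm Hpos Hdx HC1 Hsm Hev Hmass Hpde Hfc Ht0 Hxd Hphi.
  destruct HC1 as [Hc [phix [phis [Hcx [Hcs Hder]]]]].
  assert (Hder' : forall x s, 0 < s -> Rabs x < s -> is_derive (fun r => phi x r) s (phis x s))
    by (intros; apply Hder; auto).
  assert (Hs0 : 0 < xcl t0) by auto.
  destruct (hsol_hgood xcl phi t0 Hc Hs0) as [Mh Hh].
  set (s0 := xcl t0) in *.
  set (xd := Derive xcl t0) in *.
  assert (HM : 2 * phi s0 s0 + RInt (fun y => phis y s0) (-s0) s0 = 0).
  { apply (mass_zero phi phis s0 Hc Hcs Hder' Hev Hs0).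
    intros d Hd.
    destruct (near_vals xcl t0 xd (in_I a b)) with (d := d) as [t [Ht Hts]]; auto.
    - apply Derive_correct. auto.
    - apply in_I_open; auto.
    - exists (xcl t). split. exact Hts. unfold s0.
      rewrite <- (mass_rep xcl phi t Hc (Hpos t Ht)).
      rewrite <- (mass_rep xcl phi t0 Hc Hs0). apply Hmass; auto. }
  set (F := fun y => flux alpha gamma mu xcl phi y t0).
  assert (HF : F s0 - F (-s0) = - xd * RInt (fun y => phis y s0) (-s0) s0).
  { apply flux_ftc; auto.
    - intros x Hx. destruct (Hpde t0 Ht0 x Hx) as [Hex Heq].
      fold s0 in Heq. fold xd in Heq.
      assert (Ed : Derive (fun r => phi x r) s0 = phis x s0) by (apply is_derive_unique; apply Hder'; auto).
      rewrite Ed in Heq.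
      replace (- xd * phis x s0) with (Derive F x) by (unfold F; lra).
      apply Derive_correct. exact Hex.
    - intros x Hx. apply ed_continuous. intros eps He.
      destruct (cD_ed phis x s0 Hcs) with (eps := eps) as [d [Hd H]]; auto.
      { split; simpl; auto. lra. }
      exists (Rmin d (s0 - Rabs x)). split. apply Rmin_pos; lra.
      intros y Hy. apply H. pose proof (Rmin_l d (s0 - Rabs x)); lra.
      rewrite Rminus_eq_0, Rabs_R0; auto.
      split; simpl; auto. pose proof (Rmin_r d (s0 - Rabs x)). split_Rabs; lra.
    - apply cD_wcont; auto.
    - intros eps He. apply (within_ed F (fun y => Rabs y <= s0) s0); auto.
      apply Hfc; auto. change (xcl t0) with s0. rewrite Rabs_right; lra.
    - intros eps He. apply (within_ed F (fun y => Rabs y <= s0) (-s0)); auto.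
      apply Hfc; auto. change (xcl t0) with s0. rewrite Rabs_Ropp, Rabs_right; lra. }
  assert (HFm : F (- s0) = - F s0).
  { unfold F, flux. fold s0.
    rewrite (Hev s0 s0) by (auto; rewrite Rabs_right; lra).
    rewrite (hbar_even alpha xcl phi t0 Mh Ha Hev Hh).
    rewrite (hxxx_odd alpha xcl phi t0 Mh Ha Hev Hh). ring. }
  assert (HFs : F s0 = phi s0 s0 * (mob gamma mu (hbar alpha xcl phi s0 t0) * hbar_xxx alpha xcl phi s0 t0)).
  { unfold F, flux. fold s0. ring. }
  rewrite HFm in HF.
  assert (E : phi s0 s0 * (mob gamma mu (hbar alpha xcl phi s0 t0) * hbar_xxx alpha xcl phi s0 t0 - xd) = 0).
  { assert (Hint : RInt (fun y => phis y s0) (-s0) s0 = - 2 * phi s0 s0) by lra.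
    rewrite Hint in HF. rewrite HFs in HF. lra. }
  apply Rmult_integral in E. destruct E as [E|E]. contradiction. lra.
Qed.
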